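(* Assume the predecessor sets are consecutive, i.e. $\pi_C(j)=\{j-I_j,\dots,j-1\}$ for all $j$, so that $\psi_C(j)=\{1,\dots,C\}$ for $j\le C$ and $\psi_C(j)=\{j-C+1,\dots,j\}$ for $j\ge C$. Then for every $j\in\{1,\dots,J\}$ the principal submatrices indexed by the blocks $\psi_C(j)$ coincide: $$\big(\mathbf S_C^{-1}\big)_{[\psi_C(j),\psi_C(j)]}=\big(\mathbf K_{\mathbf A\mathbf A}\big)_{[\psi_C(j),\psi_C(j)]},$$ so that the block band-diagonals $-C+1,\dots,C-1$ of $\mathbf S_C^{-1}$ and $\mathbf K_{\mathbf A\mathbf A}$ agree. In particular, for $C=J$, $\mathbf S_J^{-1}=\mathbf K_{\mathbf A\mathbf A}$.
   Context: Let $k:\mathbb R^D\times\mathbb R^D\to\mathbb R$ be a positive definite kernel. For matrices $\mathbf U\in\mathbb R^{m\times D}$, $\mathbf W\in\mathbb R^{n\times D}$ whose rows are points of $\mathbb R^D$, $\mathbf K_{\mathbf U\mathbf W}\in\mathbb R^{m\times n}$ has entries $k(U_i,W_l)$. All kernel matrices that are inverted below are assumed invertible. Inducing inputs: fix $J\ge1$, $L\ge1$, $\mathbf A_j\in\mathbb R^{L\times D}$, $\mathbf A=(\mathbf A_1;\dots;\mathbf A_J)$, $M=LJ$. For $\varphi\subseteq\{1,\dots,J\}$ listed increasingly as $\varphi^1<\varphi^2<\cdots$, $\mathbf A_\varphi$ denotes the vertical stack of the corresponding blocks; for an $M\times M$ matrix $\mathbf Z$ viewed as $J\times J$ blocks of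 size $L\times L$, $\mathbf Z_{[\varphi,\varphi]}$ is the submatrix of block rows and columns in $\varphi$. Predecessor and correlation sets: for each $C\in\{1,\dots,J\}$ and $j\in\{1,\dots,J\}$ a set $\pi_C(j)\subseteq\{1,\dots,j-1\}$ with $|\pi_C(j)|=I_j:=\min(j-1,C-1)$; the correlation set is $\psi_C(j)=\pi_C(j)\cup\{j,\dots,C\}$ if $j<C$ and $\psi_C(j)=\pi_C(j)\cup\{j\}$ if $j\ge C$. Write $\pi(j)=\pi_C(j)$ when $C$ is fixed. Matrices (for fixed $C$): $\mathbf F_j=\mathbf K_{\mathbf A_j\mathbf A_{\pi(j)}}\mathbf K_{\mathbf A_{\pi(j)}\mathbf A_{\pi(j)}}^{-1}\in\mathbb R^{L\times LI_j}$; $\mathbf Q_j=\mathbf K_{\mathbf A_j\mathbf A_j}-\mathbf K_{\mathbf A_j\mathbf A_{\pi(j)}}\mathbf K_{\mathbf A_{\pi(j)}\mathbf A_{\pi(j)}}^{-1}\mathbf K_{\mathbf A_{\pi(j)}\mathbf A_j}$; if $\pi(j)=\emptyset$ then $\mathbf F_j$ is empty and $\mathbf Q_j=\mathbf K_{\mathbf A_j\mathbf A_j}$. Partition $\mathbf F_j=[\mathbf F_j^1,\dots,\mathbf F_j^{I_j}]$ into $L\times L$ blocks, $\mathbf F_j^i$ corresponding to $\pi^i(j)$. $\mathbf Q=\mathrm{blockdiag}(\mathbf Q_1,\dots,\mathbf Q_J)$; $\mathbf F\in\mathbb R^{M\times M}$ is the $J\times J$ block matrix with $\mathbb I_L$ in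 each diagonal block, $-\mathbf F_j^i$ in block $(j,\pi^i(j))$ and zero elsewhere; $\mathbf S_C=\mathbf F^T\mathbf Q^{-1}\mathbf F$ (the precision matrix of the CPoE prior $q_C(\mathbf a)=\prod_j\mathcal N(\mathbf a_j;\mathbf F_j\mathbf a_{\pi(j)},\mathbf Q_j)$). *)

(* Defs.v *)
From mathcomp Require Import all_boot all_order all_algebra.
Set Implicit Arguments. Unset Strict Implicit. Unset Printing Implicit Defensive.
Import Order.TTheory GRing.Theory Num.Theory.
Local Open Scope ring_scope.

Section CPoE.
Variables (R : realFieldType) (D : nat).

Definition pd_kernel (k : 'rV[R]_D -> 'rV[R]_D -> R) : Prop :=
  (forall x y, k x y = k y x) /\
  forall (n : nat) (X : 'I_n -> 'rV[R]_D) (c : 'I_n -> R),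
    0 <= \sum_(i < n) \sum_(l < n) c i * c l * k (X i) (X l).

Variable k : 'rV[R]_D -> 'rV[R]_D -> R.

Definition Kmx m n (U : 'M[R]_(m, D)) (W : 'M[R]_(n, D)) : 'M[R]_(m, n) :=
  \matrix_(i, l) k (row i U) (row l W).

Variables (J L : nat) (A : 'I_J -> 'M[R]_(L, D)).

Definition Afull : 'M[R]_(\sum_(j < J) L, D) :=
  @mxcol R J (fun _ => L) D (fun j => A j).

Definition Astack (phi : {set 'I_J}) : 'M[R]_(\sum_(a < #|phi|) L, D) :=
  @mxcol R #|phi| (fun _ => L) D (fun a => A (enum_val a)).

Definition blocksub (Z : 'M[R]_(\sum_(j < J) L)) (phi : {set 'I_J}) :
    'M[R]_(\sum_(a < #|phi|) L) :=
  @mxblock R #|phi| #|phi| (fun _ => L) (fun _ => L)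
    (fun a b => @submxblock R J J (fun _ => L) (fun _ => L) Z
                  (enum_val a) (enum_val b)).

Variable pi : 'I_J -> {set 'I_J}.

Definition Kpi (j : 'I_J) := Kmx (Astack (pi j)) (Astack (pi j)).

Definition Fj (j : 'I_J) : 'M[R]_(L, \sum_(a < #|pi j|) L) :=
  Kmx (A j) (Astack (pi j)) *m invmx (Kpi j).

(* Q_j (when pi j is empty the correction term is a 0-dimensional product = 0) *)
Definition Qj (j : 'I_J) : 'M[R]_L :=
  Kmx (A j) (A j) - Kmx (A j) (Astack (pi j)) *m invmx (Kpi j)
                    *m Kmx (Astack (pi j)) (A j).

Definition Qbig : 'M[R]_(\sum_(j < J) L) :=
  @mxdiag R J (fun _ => L) (fun j => Qj j).

Definition Fblock (j i : 'I_J) : 'M[R]_L :=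
  if i == j then 1%:M
  else - \sum_(a < #|pi j|)
           (if enum_val a == i
            then @submxrow R #|pi j| (fun _ => L) L (Fj j) a else 0).

Definition Fbig : 'M[R]_(\sum_(j < J) L) :=
  @mxblock R J J (fun _ => L) (fun _ => L) (fun j i => Fblock j i).

Definition S_C : 'M[R]_(\sum_(j < J) L) := Fbig^T *m invmx Qbig *m Fbig.

End CPoE.

(* correlation set psi_C(j), 0-based: j (0-based) < C-1 (0-based)  <->  j+1 < C (1-based),
   {j,...,C} (1-based) = {i | j <= i < C} (0-based) *)
Definition psi (J C : nat) (pi : 'I_J -> {set 'I_J}) (j : 'I_J) : {set 'I_J} :=
  if (j.+1 < C)%N then pi j :|: [set i : 'I_J | (j <= i < C)%N]
  else pi j :|: [set j].

(* Main.v *)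
Require Import Defs.
From mathcomp Require Import all_boot all_order all_algebra.
From mathcomp Require Import zify.
Import Order.TTheory GRing.Theory Num.Theory.
Local Open Scope ring_scope.
Set Implicit Arguments. Unset Strict Implicit. Unset Printing Implicit Defensive.

Lemma invmxM (R : comUnitRingType) n (A B : 'M[R]_n) :
  A \in unitmx -> B \in unitmx -> invmx (A *m B) = invmx B *m invmx A.
Proof.
move=> uA uB; have uX : A *m B \in unitmx by rewrite unitmx_mul uA uB.
have h : (A *m B) *m (invmx B *m invmx A) = 1%:M.
  by rewrite mulmxA mulmxK // mulmxV.
by rewrite -[LHS]mulmx1 -h mulKmx.
Qed.

Section Main.
Variables (R : realFieldType) (D : nat) (k : 'rV[R]_D -> 'rV[R]_D -> R).
Hypothesis ksym : forall x y, k x y = k y x.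

Lemma Kmx_colcol (p q : nat) (p_ : 'I_p -> nat) (q_ : 'I_q -> nat)
  (B : forall a, 'M[R]_(p_ a, D)) (Cc : forall b, 'M[R]_(q_ b, D)) :
  Kmx k (mxcol B) (mxcol Cc) = mxblock (fun a b => Kmx k (B a) (Cc b)).
Proof. by apply/matrixP => i l; rewrite !mxE !row_mxcol. Qed.

Lemma Kmx_col (p m : nat) (p_ : 'I_p -> nat)
  (B : forall a, 'M[R]_(p_ a, D)) (W : 'M[R]_(m, D)) :
  Kmx k (mxcol B) W = mxcol (fun a => Kmx k (B a) W).
Proof. by apply/matrixP => i l; rewrite !mxE !row_mxcol. Qed.

Lemma Kmx_row (p m : nat) (p_ : 'I_p -> nat)
  (B : forall a, 'M[R]_(p_ a, D)) (W : 'M[R]_(m, D)) :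
  Kmx k W (mxcol B) = mxrow (fun a => Kmx k W (B a)).
Proof. by apply/matrixP => i l; rewrite !mxE !row_mxcol. Qed.

Lemma Kmx_tr m n (U : 'M[R]_(m, D)) (W : 'M[R]_(n, D)) : (Kmx k U W)^T = Kmx k W U.
Proof. by apply/matrixP => i l; rewrite !mxE ksym. Qed.


Variables (J L : nat) (A : 'I_J -> 'M[R]_(L, D)) (pi : 'I_J -> {set 'I_J}).
Hypothesis pilt : forall j i, i \in pi j -> (i < j)%N.
Hypothesis Kpiu : forall j, Kpi k A pi j \in unitmx.

Local Notation N := (\sum_(j < J) L)%N.
Definition blk (Z : 'M[R]_N) (j i : 'I_J) : 'M[R]_L :=
  @submxblock R J J (fun _ => L) (fun _ => L) Z j i.

Lemma blk_mxblock (B : 'I_J -> 'I_J -> 'M[R]_L) j i :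
  blk (@mxblock R J J (fun _ => L) (fun _ => L) B) j i = B j i.
Proof. by rewrite /blk mxblockK. Qed.

Lemma mxblock_blk (Z : 'M[R]_N) :
  @mxblock R J J (fun _ => L) (fun _ => L) (blk Z) = Z.
Proof. exact: submxblockK. Qed.

Lemma blk_tr (Z : 'M[R]_N) j i : blk Z^T j i = (blk Z i j)^T.
Proof. by rewrite /blk tr_submxblock. Qed.

Lemma blk_mul (X Y : 'M[R]_N) j i :
  blk (X *m Y) j i = \sum_m blk X j m *m blk Y m i.
Proof. by rewrite -{1}(mxblock_blk X) -{1}(mxblock_blk Y) mul_mxblock blk_mxblock. Qed.

Lemma blkK j i : blk (Kmx k (Afull A) (Afull A)) j i = Kmx k (A j) (A i).
Proof. by rewrite /Afull Kmx_colcol blk_mxblock. Qed.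

Definition Fa (j : 'I_J) (a : 'I_#|pi j|) : 'M[R]_L :=
  @submxrow R #|pi j| (fun _ => L) L (Fj k A pi j) a.
Arguments Fa : clear implicits.

Lemma Fsum n j (Y : 'I_J -> 'M[R]_(L, n)) :
  \sum_m Fblock k A pi j m *m Y m = Y j - \sum_a Fa j a *m Y (enum_val a).
Proof.
rewrite (bigD1 j) //= /Fblock eqxx mul1mx; congr (_ + _).
rewrite (eq_bigr (fun m => - \sum_(a < #|pi j|)
     (if enum_val a == m then Fa j a *m Y m else 0))); last first.
  move=> m /negPf ->; rewrite mulNmx mulmx_suml; congr (- _).
  by apply: eq_bigr => a _; case: ifP => _ //; rewrite mul0mx.
rewrite sumrN exchange_big /=; congr (- _); apply: eq_bigr => a _.
rewrite (bigD1 (enum_val a)) /=; last first.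
  by apply/eqP => e; have := pilt (enum_valP a); rewrite e ltnn.
rewrite eqxx big1 ?addr0 // => m /andP[_]; rewrite eq_sym => /negPf -> //.
Qed.

Lemma Fsum_tr n j (Y : 'I_J -> 'M[R]_(n, L)) :
  \sum_m Y m *m (Fblock k A pi j m)^T = Y j - \sum_a Y (enum_val a) *m (Fa j a)^T.
Proof.
apply: trmx_inj; rewrite linearB /= !linear_sum /=.
under eq_bigr do rewrite trmx_mul trmxK.
rewrite Fsum sumrN; congr (_ - _); apply: eq_bigr => a _; by rewrite trmx_mul trmxK.
Qed.


Lemma Fsum_col j (Y : 'I_J -> 'M[R]_L) :
  \sum_a Fa j a *m Y (enum_val a)
  = Fj k A pi j *m @mxcol R #|pi j| (fun _ => L) L (fun a => Y (enum_val a)).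
Proof. by rewrite -{1}(submxrowK (Fj k A pi j)) mul_mxrow_mxcol. Qed.

Lemma KF j i : i \in pi j ->
  Fj k A pi j *m Kmx k (Astack A (pi j)) (A i) = Kmx k (A j) (A i).
Proof.
move=> Hi; set a0 := enum_rank_in Hi i.
have e0 : enum_val a0 = i by rewrite enum_rankK_in.
pose E := @mxcol R #|pi j| (fun _ => L) L (fun a => if a == a0 then 1%:M else 0).
have hK : Kmx k (Astack A (pi j)) (A i) = Kpi k A pi j *m E.
  rewrite /Kpi /Astack Kmx_colcol mul_mxblock_mxrow Kmx_col; apply: eq_mxcol => a.
  rewrite (bigD1 a0) //= eqxx mulmx1 big1 ?addr0 ?e0 // => b /negPf ->.
  by rewrite mulmx0.
rewrite hK /Fj -mulmxA mulKmx // /Astack Kmx_row mul_mxrow_mxcol.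
rewrite (bigD1 a0) //= eqxx mulmx1 big1 ?addr0 ?e0 // => b /negPf ->.
by rewrite mulmx0.
Qed.

Lemma QF j : Qj k A pi j + Fj k A pi j *m Kmx k (Astack A (pi j)) (A j)
  = Kmx k (A j) (A j).
Proof. by rewrite /Qj /Fj subrK. Qed.

Lemma Qj_tr j : (Qj k A pi j)^T = Qj k A pi j.
Proof.
rewrite /Qj linearB /= !trmx_mul !Kmx_tr trmx_inv /Kpi Kmx_tr !mulmxA.
by [].
Qed.

Lemma Qbig_tr : (Qbig k A pi)^T = Qbig k A pi.
Proof. by rewrite /Qbig tr_mxdiag; apply: eq_mxdiag => j; apply: Qj_tr. Qed.

Lemma blkQ j i : blk (Qbig k A pi) j i = if j == i then Qj k A pi j else 0.
Proof.
case: (eqVneq j i) => [->|ne]; first by rewrite /blk submxblock_diag.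
by rewrite /blk /Qbig /mxdiag mxblockK (negPf ne).
Qed.

Lemma blkF j i : blk (Fbig k A pi) j i = Fblock k A pi j i.
Proof. by rewrite /Fbig blk_mxblock. Qed.

Hypothesis Qu : Qbig k A pi \in unitmx.
Hypothesis Su : S_C k A pi \in unitmx.
Local Notation Sig := (invmx (S_C k A pi)).
Local Notation F := (Fbig k A pi).
Local Notation Q := (Qbig k A pi).

Lemma FSF : F *m Sig *m F^T = Q.
Proof.
move: (Su); rewrite /S_C unitmx_mul => /andP[u1 uF].
have uFt : F^T \in unitmx by rewrite unitmx_tr.
have uQi : invmx Q \in unitmx by rewrite unitmx_inv.
rewrite invmxM // invmxM // invmxK mulKVmx //.
by rewrite mulmxKV.
Qed.

Lemma Sig_tr : Sig^T = Sig.
Proof.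
rewrite trmx_inv /S_C !trmx_mul trmxK trmx_inv Qbig_tr !mulmxA //.
Qed.

Lemma blkSig_tr x y : blk Sig y x = (blk Sig x y)^T.
Proof. by rewrite -blk_tr Sig_tr. Qed.

Local Notation U := (F *m Sig).

Lemma Ueq j i : blk Q j i = blk U j i - \sum_a blk U j (enum_val a) *m (Fa i a)^T.
Proof.
by rewrite -FSF blk_mul (eq_bigr (fun m => blk U j m *m (Fblock k A pi i m)^T))
  ?Fsum_tr // => m _; rewrite blk_tr blkF.
Qed.

Lemma Ulow n : forall j i : 'I_J, (i < n)%N -> (i < j)%N -> blk U j i = 0.
Proof.
elim: n => [//|n IH] j i lin lij.
have nji : j != i by apply/eqP => e; move: lij; rewrite e ltnn.
have hz : \sum_a blk U j (enum_val a) *m (Fa i a)^T = 0.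
  apply: big1 => a _; have ha := pilt (enum_valP a).
  by rewrite (IH j) ?mul0mx //; lia.
by have := Ueq j i; rewrite blkQ (negPf nji) hz subr0 => <-.
Qed.

Lemma Udiag j : blk U j j = Qj k A pi j.
Proof.
have hz : \sum_a blk U j (enum_val a) *m (Fa j a)^T = 0.
  apply: big1 => a _; have ha := pilt (enum_valP a).
  by rewrite (@Ulow j) ?mul0mx.
by have := Ueq j j; rewrite blkQ eqxx hz subr0 => ->.
Qed.

Lemma Sigrec j i :
  blk U j i = blk Sig j i - \sum_a Fa j a *m blk Sig (enum_val a) i.
Proof.
rewrite blk_mul (eq_bigr (fun m => Fblock k A pi j m *m blk Sig m i)) ?Fsum //.
by move=> m _; rewrite blkF.
Qed.


Variable C : nat.
Hypothesis C1 : (1 <= C)%N.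
Hypothesis Hpi : forall j : 'I_J, pi j = [set i : 'I_J | (j - minn j (C - 1) <= i < j)%N].

Lemma inpi j i : (i \in pi j) = (j - minn j (C - 1) <= i < j)%N.
Proof. by rewrite Hpi inE. Qed.

Lemma band n : forall x y : 'I_J, (x < n)%N -> (y < n)%N ->
  (x < y + C)%N -> (y < x + C)%N -> blk Sig x y = Kmx k (A x) (A y).
Proof.
elim: n => [//|n IH].
have off : forall j y : 'I_J, j = n :> nat -> (y < j)%N -> (j < y + C)%N ->
    blk Sig j y = Kmx k (A j) (A y).
  move=> j y jn yj jyC.
  have rec : blk Sig j y = \sum_a Fa j a *m blk Sig (enum_val a) y.
    have := Sigrec j y; rewrite (@Ulow j.+1 j y) //; last exact: ltnW.
    by move/eqP; rewrite eq_sym subr_eq0 => /eqP.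
  rewrite rec.
  rewrite (eq_bigr (fun a => Fa j a *m Kmx k (A (enum_val a)) (A y))); last first.
    move=> a _; have := enum_valP a; rewrite inpi => ha.
    by rewrite IH //; lia.
  rewrite (Fsum_col j (fun m => Kmx k (A m) (A y))).
  have -> : @mxcol R #|pi j| (fun _ => L) L (fun a => Kmx k (A (enum_val a)) (A y))
      = Kmx k (Astack A (pi j)) (A y) by rewrite /Astack Kmx_col.
  by rewrite KF // inpi; lia.
have diag : forall j : 'I_J, j = n :> nat -> blk Sig j j = Kmx k (A j) (A j).
  move=> j jn.
  have rec : blk Sig j j = Qj k A pi j + \sum_a Fa j a *m blk Sig (enum_val a) j.
    have := Sigrec j j; rewrite Udiag => ->; by rewrite subrK.
  rewrite rec.
  rewrite (eq_bigr (fun a => Fa j a *m Kmx k (A (enum_val a)) (A j))); last first.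
    move=> a _; have := enum_valP a; rewrite inpi => ha.
    by rewrite blkSig_tr off ?Kmx_tr //; lia.
  rewrite (Fsum_col j (fun m => Kmx k (A m) (A j))).
  have -> : @mxcol R #|pi j| (fun _ => L) L (fun a => Kmx k (A (enum_val a)) (A j))
      = Kmx k (Astack A (pi j)) (A j) by rewrite /Astack Kmx_col.
  exact: QF.
move=> x y xn yn xyC yxC.
have [xlt|xge] := ltnP x n; have [ylt|yge] := ltnP y n.
- exact: (IH x y xlt ylt xyC yxC).
- have yv : y = n :> nat by lia.
  by rewrite blkSig_tr off ?Kmx_tr //; lia.
- have xv : x = n :> nat by lia.
  by apply: off => //; lia.
- have xy : x = y by apply: ord_inj; lia.
  by rewrite xy; apply: diag; lia.
Qed.

End Main.

Theorem mainTheorem11 (R : realFieldType) (D : nat)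
  (k : 'rV[R]_D -> 'rV[R]_D -> R) (J L C : nat)
  (A : 'I_J -> 'M[R]_(L, D)) (pi : 'I_J -> {set 'I_J}) :
  pd_kernel k ->
  (1 <= L)%N -> (1 <= C <= J)%N ->
  (forall j : 'I_J, pi j = [set i : 'I_J | (j - minn j (C - 1) <= i < j)%N]) ->
  (forall j : 'I_J, Kpi k A pi j \in unitmx) ->
  Qbig k A pi \in unitmx ->
  S_C k A pi \in unitmx ->
  (forall j : 'I_J,
     blocksub (invmx (S_C k A pi)) (psi C pi j)
     = blocksub (Kmx k (Afull A) (Afull A)) (psi C pi j))
  /\ (C = J -> invmx (S_C k A pi) = Kmx k (Afull A) (Afull A)).
Proof.
move=> [ksym _] L1 /andP[C1 CJ] Hpi Kpiu Qu Su.
have pilt : forall j i : 'I_J, i \in pi j -> (i < j)%N.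
  by move=> j i; rewrite Hpi inE => /andP[].
have Bd : forall x y : 'I_J, (x < y + C)%N -> (y < x + C)%N ->
    blk (invmx (S_C k A pi)) x y = blk (Kmx k (Afull A) (Afull A)) x y.
  move=> x y h1 h2; rewrite blkK //.
  by apply: (band ksym pilt Kpiu Qu Su C1 Hpi (n := J)).
split.
  move=> j; rewrite /blocksub; apply: eq_mxblock => a b.
  have hp : forall x, x \in psi C pi j -> if (j.+1 < C)%N then (x < C)%N
      else (j - minn j (C - 1) <= x <= j)%N.
    move=> x; rewrite /psi; case: ifP => hjC; rewrite !inE Hpi inE.
      by case/orP => /andP[]; lia.
    by case/orP => [/andP[]|/eqP ->]; lia.
  have ha := hp _ (enum_valP a); have hb := hp _ (enum_valP b).
  apply: Bd; case: ifP ha hb => _; lia.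
move=> CJe; rewrite -(mxblock_blk (invmx (S_C k A pi))).
rewrite -(mxblock_blk (Kmx k (Afull A) (Afull A))).
by apply: eq_mxblock => x y; have hx := ltn_ord x; have hy := ltn_ord y; apply: Bd; lia.
Qed.
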